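(* Let $\mathcal G=(\mathcal V,\mathcal E)$ be an undirected simple graph, $k\ge1$, $d\ge2$, and let $v,w\in\mathcal V$ satisfy $\mathrm{dist}(v,w)=k$. Suppose the radius-$k$ neighborhood of $v$ is a $d$-regular tree, i.e. the subgraph induced on the vertices at distance at most $k$ from $v$ is a tree and every such vertex has degree $d$ in $\mathcal G$. Let $I^A_{v,k}(w)$ (resp. $I^B_{v,k}(w)$) denote the influence of $w$ on the $k$-th sequence element at $v$ for the adjacency extraction $\mathbf S^{(k)}=\tilde{\mathbf A}_{\mathcal G}^k\mathbf X$ (resp. the non-backtracking extraction $\mathbf S^{(k)}=\mathbf B_{\mathcal G}^{(k)}\mathbf X$). Then $$\frac{I^A_{v,k}(w)}{I^B_{v,k}(w)}=\left(\frac{d-1}{d}\right)^{k-1}.$$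
   Context: $\mathbf X\in\mathbb R^{n\times d'}$ are node features with rows $\mathbf x_u$; $\mathbf s_v^{(k)}$ is row $v$ of $\mathbf S^{(k)}$. $\mathbf A_{\mathcal G}$ is the adjacency matrix, $\mathbf D_{\mathcal G}$ the diagonal degree matrix, $\tilde{\mathbf A}_{\mathcal G}=\mathbf D_{\mathcal G}^{-1/2}\mathbf A_{\mathcal G}\mathbf D_{\mathcal G}^{-1/2}$. Non-backtracking matrices: $\mathbf B_{\mathcal G}^{(0)}=\mathbf I$, $\mathbf B_{\mathcal G}^{(1)}=\mathbf A_{\mathcal G}$, $\mathbf B_{\mathcal G}^{(2)}=\mathbf A_{\mathcal G}^2-\mathbf D_{\mathcal G}$, $\mathbf B_{\mathcal G}^{(t+2)}=\mathbf A_{\mathcal G}\mathbf B_{\mathcal G}^{(t+1)}-(\mathbf D_{\mathcal G}-\mathbf I)\mathbf B_{\mathcal G}^{(t)}$. Influence: $I_{v,k}(w)=\mathbf e^T\big[\partial\mathbf s_v^{(k)}/\partial\mathbf x_w\big]\mathbf e\,\big/\,\sum_{u\in\mathcal V}\mathbf e^T\big[\partial\mathbf s_v^{(k)}/\partial\mathbf x_u\big]\mathbf e$, with $\mathbf e$ the all-ones vector. *)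

(* Defs.v *)
From HB Require Import structures.
From mathcomp Require Import all_boot all_order all_algebra.
Set Implicit Arguments. Unset Strict Implicit. Unset Printing Implicit Defensive.
Import Order.TTheory GRing.Theory Num.Theory.
Local Open Scope ring_scope.

Section GraphDefs.
Variable R : rcfType.
Variable n : nat.
Variable e : rel 'I_n.

Definition simple_graph : Prop := symmetric e /\ irreflexive e.

Definition deg (u : 'I_n) : nat := #|[set x | e u x]|.

Fixpoint ball (k : nat) (v : 'I_n) : {set 'I_n} :=
  match k with
  | 0 => [set v]
  | k'.+1 => ball k' v :|: [set x | [exists y in ball k' v, e y x]]
  end.

Definition dist_eq (v w : 'I_n) (k : nat) : Prop :=
  w \in ball k v /\ forall j, (j < k)%N -> w \notin ball j v.

Definition induced_tree (S : {set 'I_n}) : Prop :=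
  (forall x y, x \in S -> y \in S ->
     exists p : seq 'I_n, [/\ path e x p, last x p = y & all (mem S) p])
  /\ ~ (exists c : seq 'I_n, [/\ (3 <= size c)%N, ucycle e c & all (mem S) c]).

Definition regular_tree_nbhd (v : 'I_n) (k d : nat) : Prop :=
  induced_tree (ball k v) /\ forall u, u \in ball k v -> deg u = d.

Definition adj_mx : 'M[R]_n := \matrix_(i, j) (e i j)%:R.
Definition deg_mx : 'M[R]_n := \matrix_(i, j) ((deg i)%:R *+ (i == j)).
Definition deg_isqrt_mx : 'M[R]_n :=
  \matrix_(i, j) ((Num.sqrt (deg i)%:R)^-1 *+ (i == j)).
Definition norm_adj_mx : 'M[R]_n := deg_isqrt_mx *m adj_mx *m deg_isqrt_mx.

Definition mxpow (M : 'M[R]_n) (k : nat) : 'M[R]_n :=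
  iter k (fun B => M *m B) 1%:M.

Fixpoint nb_mx (t : nat) : 'M[R]_n :=
  match t with
  | 0 => 1%:M
  | 1 => adj_mx
  | 2 => adj_mx *m adj_mx - deg_mx
  | (((t1.+1) as t2).+1) => adj_mx *m nb_mx t2 - (deg_mx - 1%:M) *m nb_mx t1
  end.
End GraphDefs.

Section Influence.
Variable R : rcfType.
Variables n d' : nat.

(* Jacobian d F / d x_u of a LINEAR map F : R^{n x d'} -> R^{d'} (row vectors);
   for linear maps the partial derivative in direction delta_mx u j is F (delta_mx u j).
   Entry (i, j) = d F_i / d X_{u j}. *)
Definition lin_jac (F : 'M[R]_(n, d') -> 'rV[R]_d') (u : 'I_n) : 'M[R]_d' :=
  \matrix_(i, j) F (delta_mx u j) 0 i.

Definition eJe (J : 'M[R]_d') : R :=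
  ((const_mx 1 : 'rV[R]_d') *m J *m (const_mx 1 : 'cV[R]_d')) 0 0.

Definition extract (M : 'M[R]_n) (v : 'I_n) (X : 'M[R]_(n, d')) : 'rV[R]_d' :=
  row v (M *m X).

Definition influence (M : 'M[R]_n) (v w : 'I_n) : R :=
  eJe (lin_jac (extract M v) w) / \sum_(u < n) eJe (lin_jac (extract M v) u).
End Influence.

(* Main.v *)
Require Import Defs.
From HB Require Import structures.
From mathcomp Require Import all_boot all_order all_algebra.
From mathcomp Require Import zify ring.
Set Implicit Arguments. Unset Strict Implicit. Unset Printing Implicit Defensive.
Import Order.TTheory GRing.Theory Num.Theory.

Ltac slia := repeat match goal with
  | H : ?T |- _ => lazymatch T with
      | is_true (leq _ _) => fail
      | is_true (_ && _) => fail
      | @eq nat _ _ => fail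
      | nat => fail
      | _ => clear H
     end
  end; lia.

Section Comb.
Variables (n : nat) (e : rel 'I_n) (v : 'I_n).
Hypothesis esym : symmetric e.

Local Notation B i := (ball e i v).

Lemma ballS i : B i \subset B i.+1.
Proof. by rewrite /= subsetUl. Qed.

Lemma ball_mono i j : (i <= j)%N -> B i \subset B j.
Proof.
move=> /subnK <-; elim: (j - i)%N => [|m IH] //=.
by rewrite (subset_trans IH) // ?addSn ballS.
Qed.

Lemma ball_step i x y : x \in B i -> e x y -> y \in B i.+1.
Proof.
move=> xi exy; rewrite /= inE; apply/orP; right; rewrite inE.
by apply/existsP; exists x; rewrite xi.
Qed.

Lemma ball_back i y : y \in B i.+1 -> y \notin B i -> exists2 x, x \in B i & e x y.
Proof.
rewrite /= inE => /orP [->//|]; rewrite inE => /existsP [x /andP [xi exy]] _.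
by exists x.
Qed.

Definition lay i u := (u \in B i) && (if i is i'.+1 then u \notin B i' else true).

Lemma lay_ball i u : lay i u -> u \in B i. Proof. by case/andP. Qed.

Lemma lay_inj i j u : lay i u -> lay j u -> i = j.
Proof.
wlog lt: i j / (i < j)%N.
  move=> H li lj; case: (ltngtP i j) => [h|h|//]; [exact: H | symmetry; exact: H].
case: j lt => // j; rewrite ltnS => lt /andP [ui _] /andP [_ uj].
by move: uj; rewrite (subsetP (ball_mono lt) _ ui).
Qed.

Lemma lay0 u : lay 0 u -> u = v.
Proof. by rewrite /lay /= andbT inE => /eqP. Qed.

Lemma parent_lay i u x : lay i.+1 u -> e x u -> x \in B i -> lay i x.
Proof.
case/andP=> _ nu exu xi; rewrite /lay xi /=; case: i nu xi => // i nu xi.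
by apply/negP => xi'; rewrite (ball_step xi' exu) in nu.
Qed.

Lemma lay_parent i u : lay i.+1 u -> exists2 x, lay i x & e x u.
Proof.
move=> lu; case/andP: (lu) => u1 nu; case: (ball_back u1 nu) => x xi exu.
by exists x => //; exact: parent_lay lu exu xi.
Qed.

Lemma chain j u : lay j u -> exists f : nat -> 'I_n,
  [/\ f j = u, forall i, (i <= j)%N -> lay i (f i)
    & forall i, (i < j)%N -> e (f i) (f i.+1)].
Proof.
elim: j u => [|j IH] u lu.
  by exists (fun _ => u); split => // i; rewrite leqn0 => /eqP ->.
case: (lay_parent lu) => x lx exu; case: (IH x lx) => f [fj fl fe].
exists (fun i => if i == j.+1 then u else f i); split.
- by rewrite eqxx.
- move=> i; rewrite leq_eqVlt => /orP [/eqP ->|]; first by rewrite eqxx.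
  rewrite ltnS => ij; have -> : (i == j.+1) = false by apply/eqP; slia.
  exact: fl.
- move=> i; rewrite ltnS leq_eqVlt => /orP [/eqP ->|ij].
  + have -> : (j == j.+1) = false by apply/eqP; slia.
    by rewrite eqxx fj.
  + have -> : (i == j.+1) = false by apply/eqP; slia.
    have -> : (i.+1 == j.+1) = false by apply/eqP; slia.
    exact: fe.
Qed.

Lemma path_iota (h : nat -> 'I_n) a l :
  (forall i, (a <= i < a + l)%N -> e (h i) (h i.+1)) ->
  path e (h a) [seq h i | i <- iota a.+1 l].
Proof.
elim: l a => [//|l IH] a H /=.
apply/andP; split; first by apply: H; slia.
by apply: IH => i hi; apply: H; slia.
Qed.

Lemma last_iota (h : nat -> 'I_n) a l :
  last (h a) [seq h i | i <- iota a.+1 l] = h (a + l)%N.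
Proof.
elim: l a => [|l IH] a /=; first by rewrite addn0.
by rewrite IH addSnnS.
Qed.

Variable k : nat.
Hypothesis notree :
  ~ (exists c : seq 'I_n, [/\ (3 <= size c)%N, ucycle e c & all (mem (B k)) c]).

Lemma uparent j u a b : lay j.+1 u -> (j.+1 <= k)%N -> e a u -> e b u ->
  a \in B j -> b \in B j -> a = b.
Proof.
move=> lu jk eau ebu aj bj.
have la := parent_lay lu eau aj; have lb := parent_lay lu ebu bj.
case: (chain la) => f [fj fl fe]; case: (chain lb) => g [gj gl ge].
apply/eqP; apply/negPn/negP => ab.
have exP : exists i, (i <= j)%N && (f i == g i).
  by exists 0; rewrite leq0n /= (lay0 (fl 0 (leq0n j))) (lay0 (gl 0 (leq0n j))).
have ubP : forall i, (i <= j)%N && (f i == g i) -> (i <= j)%N by move=> i /andP[].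
case: (ex_maxnP exP ubP) => m /andP [mj /eqP fgm] mmax.
have mj' : (m < j)%N.
  rewrite ltn_neqAle mj andbT; apply/eqP => emj.
  by move: ab; rewrite -fj -gj -emj fgm eqxx.
pose l := (j - m)%N.
have lE : j = (m + l)%N by rewrite /l; slia.
pose s1 := [seq f i | i <- iota m.+1 l].
pose s2 := [seq g (j - i)%N | i <- iota 0 l].
apply: notree; exists (f m :: s1 ++ u :: s2); split.
- rewrite /= size_cat /= !size_map !size_iota; slia.
- rewrite /ucycle; apply/andP; split.
  + rewrite /cycle rcons_cat rcons_cons cat_path; apply/andP; split.
      by apply: path_iota => i hi; apply: fe; slia.
    rewrite last_iota -lE fj /= eau /=.
    rewrite rcons_path; apply/andP; split.
      rewrite /s2; case El : l => [|l'] //=.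
      apply/andP; split; first by rewrite subn0 gj esym.
      move: (@path_iota (fun i => g (j - i)%N) 0 l') => /= H; apply: H => i hi.
      have -> : (j - i = (j - i.+1).+1)%N by slia.
      rewrite esym; apply: ge; slia.
    have -> : last u s2 = g m.+1.
      rewrite /s2; case El : l => [|l']; first by move: El; rewrite /l; slia.
      rewrite /=.
      have := @last_iota (fun i => g (j - i)%N) 0 l'; rewrite /= => ->.
      congr g; slia.
    by rewrite fgm esym; apply: ge.
  + have -> : f m :: s1 ++ u :: s2 = [seq f i | i <- iota m l.+1] ++ u :: s2 by [].
    have inj1 : {in iota m l.+1 &, injective f}.
      move=> i i' /[!mem_iota] hi hi' fii.
      apply: (@lay_inj _ _ (f i)); first (apply: fl; slia).
      rewrite fii; apply: fl; slia.
    have inj2 : {in iota 0 l &, injective (fun i => g (j - i)%N)}.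
      move=> i i' /[!mem_iota] hi hi' /= gii.
      have : (j - i)%N = (j - i')%N.
        apply: (@lay_inj _ _ (g (j - i)%N)); first (apply: gl; slia).
        rewrite gii; apply: gl; slia.
      slia.
    have U1 : uniq [seq f i | i <- iota m l.+1].
      by rewrite (map_inj_in_uniq inj1) iota_uniq.
    have U2 : uniq s2 by rewrite (map_inj_in_uniq inj2) iota_uniq.
    rewrite cat_uniq cons_uniq; apply/and3P; split; first exact: U1; last first.
      apply/andP; split; last exact: U2.
      apply/mapP => -[i /[!mem_iota] hi fiu].
      rewrite fiu in lu; have := lay_inj lu (gl (j - i)%N (leq_subr _ _)).
      slia.
    * apply/hasPn => x; rewrite inE => /orP [/eqP ->|/mapP [i /[!mem_iota] hi ->]].
        apply/mapP => -[i /[!mem_iota] hi fiu].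
        rewrite fiu in lu; have := lay_inj lu (fl i ltac:(slia)).
        slia.
      apply/mapP => -[i' /[!mem_iota] hi' gfi].
      have H := gl (j - i)%N (leq_subr _ _).
      rewrite gfi in H; have ei := lay_inj H (fl i' ltac:(slia)).
      have : (i' <= m)%N.
        apply: mmax; apply/andP; split; first slia.
        by rewrite -gfi ei.
      slia.
- rewrite /= all_cat /=; apply/and4P; split.
  + by apply: (subsetP (ball_mono _)) (lay_ball (fl m mj)); slia.
  + apply/allP => x /mapP [i /[!mem_iota] hi ->].
    by apply: (subsetP (ball_mono _)) (lay_ball (fl i _)); slia.
  + by apply: (subsetP (ball_mono jk)) (lay_ball lu).
  + apply/allP => x /mapP [i /[!mem_iota] hi ->].
    by apply: (subsetP (ball_mono _)) (lay_ball (gl (j - i)%N (leq_subr _ _))); slia.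
Qed.

End Comb.
Arguments ball_mono [n e v i j].

Local Open Scope ring_scope.

Lemma zmA (V : zmodType) (a b c x : V) : a - b - (c - x) = a - c - (b - x).
Proof. by rewrite !opprB addrACA [RHS]addrACA [- c + _]addrC. Qed.

Lemma subE (R : pzRingType) m p (X Y : 'M[R]_(m, p)) i j : (X - Y) i j = X i j - Y i j.
Proof. by rewrite !mxE. Qed.

Lemma mxpowS (R : rcfType) n (M : 'M[R]_n) t : mxpow M t.+1 = mxpow M t *m M.
Proof.
elim: t => [|t IH]; first by rewrite /mxpow /= mulmx1 mul1mx.
have E : forall s, mxpow M s.+1 = M *m mxpow M s by [].
by rewrite E {1}IH mulmxA.
Qed.

Lemma influenceE (R : rcfType) n d' (M : 'M[R]_n) v w : (0 < d')%N ->
  influence d' M v w = M v w / \sum_u M v u.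
Proof.
move=> d0.
have J : forall u : 'I_n, eJe (lin_jac (@extract R n d' M v) u) = M v u *+ d'.
  move=> u.
  have L : lin_jac (@extract R n d' M v) u = (M v u)%:M.
    apply/matrixP => i j; rewrite [LHS]mxE /extract [LHS]mxE [LHS]mxE.
    rewrite (bigD1 u) //= big1 ?addr0.
      rewrite [(M v u)%:M i j]mxE [delta_mx u j u i]mxE eqxx /=.
      by case: (i == j); rewrite ?mulr1 ?mulr0.
    by move=> x xu; rewrite mxE (negbTE xu) mulr0.
  rewrite /eJe L mul_mx_scalar -scalemxAl [LHS]mxE [X in _ * X]mxE.
  rewrite (eq_bigr (fun _ => 1)); last by move=> j _; rewrite !mxE mulr1.
  by rewrite sumr_const card_ord mulr_natr.
rewrite /influence J; under eq_bigr do rewrite J.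
rewrite sumrMnl -[M v w *+ _]mulr_natr -[(\sum_u M v u) *+ _]mulr_natr.
rewrite invfM mulrACA divff ?mulr1 //.
by rewrite pnatr_eq0 -lt0n.
Qed.

Section Main.
Variables (R : rcfType) (n : nat) (e : rel 'I_n) (v : 'I_n) (k d : nat).
Hypothesis esym : symmetric e.
Hypothesis notree : ~ (exists c : seq 'I_n,
  [/\ (3 <= size c)%N, ucycle e c & all (mem (ball e k v)) c]).
Hypothesis degd : forall u, u \in ball e k v -> deg e u = d.
Hypothesis d2 : (2 <= d)%N.

Local Notation B i := (ball e i v).
Local Notation A := (adj_mx R e).
Local Notation N := (norm_adj_mx R e).
Local Notation nb := (nb_mx R e).

Lemma diag_mulE (f : 'I_n -> R) (X : 'M[R]_n) i j :
  ((\matrix_(i0, j0) (f i0 *+ (i0 == j0))) *m X) i j = f i * X i j.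
Proof.
rewrite mxE (bigD1 i) //= mxE eqxx mulr1n big1 ?addr0 // => x xi.
by rewrite mxE eq_sym (negbTE xi) mulr0n mul0r.
Qed.

Lemma mul_diagE (f : 'I_n -> R) (X : 'M[R]_n) i j :
  (X *m (\matrix_(i0, j0) (f i0 *+ (i0 == j0)))) i j = X i j * f j.
Proof.
rewrite mxE (bigD1 j) //= mxE eqxx mulr1n big1 ?addr0 // => x xj.
by rewrite mxE (negbTE xj) mulr0n mulr0.
Qed.

Lemma AE x u : A x u = (e x u)%:R. Proof. by rewrite mxE. Qed.

Definition isq (x : 'I_n) : R := (Num.sqrt (deg e x)%:R)^-1.

Lemma NE x u : N x u = isq x * (e x u)%:R * isq u.
Proof.
by rewrite /norm_adj_mx /deg_isqrt_mx (mul_diagE isq) (diag_mulE isq) AE.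
Qed.

Lemma d0 : d%:R != 0 :> R.
Proof. by rewrite pnatr_eq0 -lt0n (leq_trans _ d2). Qed.

Lemma isq2 x : x \in B k -> isq x * isq x = (d%:R)^-1.
Proof.
by move=> xk; rewrite /isq -invfM -expr2 sqr_sqrtr ?ler0n // degd.
Qed.

Lemma sum_e x : \sum_u ((e x u)%:R : R) = (deg e x)%:R.
Proof.
rewrite -natr_sum; congr (_%:R).
rewrite /deg -sum1_card [RHS]big_mkcond; apply: eq_bigr => u _.
by rewrite inE; case: (e x u).
Qed.

Lemma id_row : \sum_u (1%:M : 'M[R]_n) v u = 1.
Proof.
rewrite (bigD1 v) //= big1 ?addr0; first by rewrite mxE eqxx.
by move=> u uv; rewrite mxE eq_sym (negbTE uv).
Qed.

Lemma SA t u : u \notin B t -> mxpow N t v u = 0.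
Proof.
elim: t u => [|t IH] u nu.
  by rewrite /mxpow /= mxE; move: nu; rewrite /= inE eq_sym => /negbTE ->.
rewrite mxpowS mxE big1 // => x _.
case xt: (x \in B t); last by rewrite IH ?xt // mul0r.
rewrite NE; case exu: (e x u); last by rewrite mulr0 mul0r mulr0.
by rewrite (ball_step xt exu) in nu.
Qed.

Lemma sumN x t : (t < k)%N -> x \in B t -> \sum_u N x u = 1.
Proof.
move=> tk xt; have xk : x \in B k := subsetP (ball_mono (ltnW tk)) _ xt.
transitivity (\sum_u (e x u)%:R * (d%:R)^-1 : R).
  apply: eq_bigr => u _; rewrite NE; case exu: (e x u); last by rewrite !(mulr0, mul0r).
  have uk : u \in B k := subsetP (ball_mono tk) _ (ball_step xt exu).
  by rewrite mulr1 mul1r -(isq2 xk) /isq (degd uk) (degd xk).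
by rewrite -mulr_suml sum_e degd // mulfV // d0.
Qed.

Lemma sumA t : (t <= k)%N -> \sum_u mxpow N t v u = 1.
Proof.
elim: t => [|t IH] tk; first exact: id_row.
under eq_bigr do rewrite mxpowS mxE.
rewrite exchange_big /= -[RHS](IH (ltnW tk)); apply: eq_bigr => x _.
rewrite -mulr_sumr; case xt: (x \in B t); first by rewrite (sumN tk xt) mulr1.
by rewrite SA ?xt // mul0r.
Qed.

Lemma valA t u : lay e v t u -> (t <= k)%N -> mxpow N t v u = ((d%:R)^-1) ^+ t.
Proof.
elim: t u => [|t IH] u lu tk.
  by rewrite (lay0 lu) /mxpow /= mxE eqxx expr0.
case: (lay_parent lu) => p lp epu.
rewrite mxpowS mxE (bigD1 p) //= big1 ?addr0.
  rewrite IH // ?(ltnW tk) // NE epu mulr1 exprSr; congr (_ * _).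
  have pk := subsetP (ball_mono (ltnW tk)) _ (lay_ball lp).
  have uk := subsetP (ball_mono tk) _ (lay_ball lu).
  by rewrite -(isq2 pk) /isq (degd uk) (degd pk).
move=> x xp; case xt: (x \in B t); last by rewrite SA ?xt // mul0r.
rewrite NE; case exu: (e x u); last by rewrite mulr0 mul0r mulr0.
by case/eqP: xp; apply: (uparent esym notree lu tk exu epu xt (lay_ball lp)).
Qed.

Local Notation D := (deg_mx R e).

Lemma nbL t : nb t.+3 = A *m nb t.+2 - (D - 1%:M) *m nb t.+1.
Proof. by []. Qed.

Lemma nbR t : nb t.+3 = nb t.+2 *m A - nb t.+1 *m (D - 1%:M).
Proof.
have P0 : nb 3 = nb 2 *m A - nb 1 *m (D - 1%:M).
  rewrite nbL /=.
  by rewrite !mulmxBr !mulmxBl mul1mx mulmx1 !mulmxA zmA.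
have P1 : nb 4 = nb 3 *m A - nb 2 *m (D - 1%:M).
  have L : A *m nb 3 = A *m nb 2 *m A - A *m A *m (D - 1%:M).
    by rewrite P0 mulmxBr !mulmxA.
  have Rr : nb 3 *m A = A *m nb 2 *m A - (D - 1%:M) *m A *m A.
    by rewrite (nbL 0) mulmxBl.
  have ED : (D - 1%:M) *m D = D *m (D - 1%:M).
    by rewrite mulmxBl mulmxBr mul1mx mulmx1.
  rewrite (nbL 1) L Rr.
  have -> : nb 2 = A *m A - D by [].
  rewrite [(D - 1%:M) *m (A *m A - D)]mulmxBr [(A *m A - D) *m (D - 1%:M)]mulmxBl.
  by rewrite ED !mulmxA zmA.
suff H : forall t, nb t.+3 = nb t.+2 *m A - nb t.+1 *m (D - 1%:M) /\
                   nb t.+4 = nb t.+3 *m A - nb t.+2 *m (D - 1%:M).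
  by case: (H t).
clear t; elim=> [|t [IH0 IH1]]; first by split.
split => //.
have L1 : A *m nb t.+4 = A *m nb t.+3 *m A - A *m nb t.+2 *m (D - 1%:M).
  by rewrite IH1 mulmxBr !mulmxA.
have L2 : (D - 1%:M) *m nb t.+3 =
    (D - 1%:M) *m nb t.+2 *m A - (D - 1%:M) *m nb t.+1 *m (D - 1%:M).
  by rewrite IH0 mulmxBr !mulmxA.
have R1 : nb t.+4 *m A = A *m nb t.+3 *m A - (D - 1%:M) *m nb t.+2 *m A.
  by rewrite (nbL t.+1) mulmxBl.
have R2 : nb t.+3 *m (D - 1%:M) =
    A *m nb t.+2 *m (D - 1%:M) - (D - 1%:M) *m nb t.+1 *m (D - 1%:M).
  by rewrite (nbL t) mulmxBl.
by rewrite (nbL t.+2) L1 L2 R1 R2 zmA.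
Qed.

Definition Dc (c : R) : 'M[R]_n := \matrix_(i, j) (((deg e i)%:R - c) *+ (i == j)).

Lemma nbM t : nb t.+2 = nb t.+1 *m A - nb t *m Dc (0 < t)%:R.
Proof.
case: t => [|t].
  have -> : nb 2 = A *m A - D by [].
  rewrite /= mul1mx; congr (_ - _); apply/matrixP => i j.
  by rewrite !mxE subr0.
rewrite nbR; congr (_ - _ *m _); apply/matrixP => i j.
by rewrite !mxE /=; case: (i == j); rewrite ?mulr1n ?mulr0n ?subr0.
Qed.

Lemma nbE t u : nb t.+2 v u =
  \sum_x nb t.+1 v x * (e x u)%:R - nb t v u * ((deg e u)%:R - (0 < t)%:R).
Proof.
rewrite nbM subE (mul_diagE (fun i => (deg e i)%:R - (0 < t)%:R)) mxE.
by congr (_ - _); apply: eq_bigr => x _; rewrite AE.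
Qed.

Lemma SB t u : u \notin B t -> nb t v u = 0.
Proof.
suff H : forall t, (forall u, u \notin B t -> nb t v u = 0) /\
                   (forall u, u \notin B t.+1 -> nb t.+1 v u = 0).
  by case: (H t) => H1 _; apply: H1.
clear t u; elim=> [|t [IH0 IH1]].
  split => u nu.
    by rewrite /= mxE; move: nu; rewrite /= inE eq_sym => /negbTE ->.
  rewrite /= mxE; case evu: (e v u) => //.
  by rewrite (@ball_step _ e v 0 v u _ evu) ?inE in nu.
split => // u nu; rewrite nbE big1 ?sub0r.
  rewrite IH0 ?mul0r ?oppr0 //; apply: contra nu => ut.
  exact: (subsetP (ball_mono (leq_trans (leqnSn t) (leqnSn _))) _ ut).
move=> x _; case xt: (x \in B t.+1); last by rewrite IH1 ?xt // mul0r.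
case exu: (e x u); last by rewrite mulr0.
by rewrite (ball_step xt exu) in nu.
Qed.

Lemma sum_deg (f : 'I_n -> R) j (h : nat -> R) : (j <= k)%N ->
  (forall x, x \notin B j -> f x = 0) ->
  \sum_x f x * h (deg e x) = h d * \sum_x f x.
Proof.
move=> jk fs; rewrite mulr_sumr; apply: eq_bigr => x _.
case xj: (x \in B j).
  by rewrite degd ?(subsetP (ball_mono jk) _ xj) // mulrC.
by rewrite fs ?xj // mul0r mulr0.
Qed.

Definition Ssum t := \sum_u nb t v u.

Lemma sumB t : (t.+2 <= k)%N ->
  Ssum t.+2 = d%:R * Ssum t.+1 - (d%:R - (0 < t)%:R) * Ssum t.
Proof.
move=> tk; rewrite /Ssum.
under eq_bigr do rewrite nbE.
rewrite sumrB exchange_big /=.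
under eq_bigr do rewrite -mulr_sumr sum_e.
rewrite (@sum_deg (fun x => nb t.+1 v x) t.+1 (fun m => m%:R)) ?(ltnW tk) //;
  last by move=> x; apply: SB.
rewrite (@sum_deg (fun x => nb t v x) t (fun m => m%:R - (0 < t)%:R)) //;
  last (by move=> x; apply: SB); last by apply: leq_trans (leqnSn _) (ltnW tk).
Qed.

Lemma sumB1 : Ssum 1 = d%:R.
Proof.
rewrite /Ssum /=; under eq_bigr do rewrite AE.
rewrite sum_e degd //; apply: (subsetP (ball_mono (leq0n k))); by rewrite inE.
Qed.

Lemma sumBc s : (s.+1 <= k)%N -> Ssum s.+1 = d%:R * (d%:R - 1) ^+ s.
Proof.
suff H : forall s, (s.+2 <= k)%N ->
    Ssum s.+1 = d%:R * (d%:R - 1) ^+ s /\ Ssum s.+2 = d%:R * (d%:R - 1) ^+ s.+1.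
  case: s => [|s] sk; first by rewrite sumB1 expr0 mulr1.
  by case: (H s sk).
clear s; elim=> [|s IH] sk.
  rewrite sumB1 expr0 mulr1; split => //.
  rewrite sumB // sumB1 /Ssum id_row /= expr1; ring.
case: (IH (ltnW sk)) => H1 H2; split => //.
rewrite sumB // H1 H2 /= !exprS; ring.
Qed.

Lemma valB t u : lay e v t.+1 u -> (t.+1 <= k)%N -> nb t.+1 v u = 1.
Proof.
suff H : forall t, (t.+1 <= k)%N ->
   (forall u, lay e v t u -> nb t v u = 1) /\ (forall u, lay e v t.+1 u -> nb t.+1 v u = 1).
  by move=> lu tk; case: (H t tk) => _; apply.
clear t u; elim=> [|t IH] tk.
  split => u lu; first by rewrite (lay0 lu) /= mxE eqxx.
  case/andP: lu => u1 nu; case: (ball_back u1 nu) => x; rewrite inE => /eqP -> evu.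
  by rewrite /= mxE evu.
case: (IH (ltnW tk)) => _ H1; split => // u lu.
rewrite nbE (SB (u := u) (t := t)) ?mul0r ?subr0; last first.
  case/andP: lu => _; apply: contra; apply: (subsetP (ball_mono _)); exact: leqnSn.
case: (lay_parent lu) => p lp epu.
rewrite (bigD1 p) // big1 ?Monoid.mulm1; first by rewrite H1 // epu mulr1.
move=> x xp; case xt: (x \in B t.+1); last by rewrite SB ?xt // mul0r.
case exu: (e x u); last by rewrite mulr0.
by case/eqP: xp; apply: (uparent esym notree lu tk exu epu xt (lay_ball lp)).
Qed.

End Main.

Theorem lemmaG2 (R : rcfType) (n d' : nat) (e : rel 'I_n)
  (k d : nat) (v w : 'I_n) :
  simple_graph e -> (0 < d')%N -> (1 <= k)%N -> (2 <= d)%N ->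
  dist_eq e v w k ->
  regular_tree_nbhd e v k d ->
  influence d' (mxpow (norm_adj_mx R e) k) v w
    / influence d' (nb_mx R e k) v w
  = ((d%:R - 1) / d%:R) ^+ (k - 1).
Proof.
move=> [esym _] d0' k1 d2 [wk wnot] [[_ notree] degd].
rewrite !influenceE //.
case: k k1 wk wnot notree degd => // s _ wk wnot notree degd.
have lw : lay e v s.+1 w by rewrite /lay wk /= wnot.
rewrite (valA R esym notree degd lw (leqnn _)) (sumA R degd d2 (leqnn _)).
rewrite (valB R esym notree lw (leqnn _)).
rewrite -/(Ssum R e v s.+1) (sumBc R degd (leqnn _)).
have dn0 : d%:R != 0 :> R by rewrite pnatr_eq0 -lt0n (leq_trans _ d2).
rewrite subSS subn0 divr1 div1r invrK exprS exprMn exprVn.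
by rewrite mulrCA !mulrA mulfV // mul1r mulrC.
Qed.
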